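(* For every process term $p$ and every $d\in\mathbb{D}$: $[\![p]\!]\le d$ if and only if $(\mathbb{D},d)\models^a\varphi_p$.
   Context: Fix a finite set $\mathrm{Act}$ of events. For a dcpo $D$, $K(D)$ denotes its compact elements; a bifinite (SFP) domain is an algebraic dcpo in which for each finite $F\subseteq K(D)$ iterated minimal-upper-bound sets are finite and in $K(D)$ and every upper bound of $F$ is above a minimal upper bound. Scott topology: sets $U={\uparrow}(U\cap K(D))$; Lawson topology generated by ${\uparrow}k\setminus{\uparrow}l$, $k,l\in K(D)$. The mixed powerdomain $\mathcal{M}(D)$: pairs $(L,U)$, $L$ Scott-closed, $U$ Lawson-closed upper, $L={\downarrow}(L\cap U)$, ordered by $(L,U)\le(L',U')$ iff $L\subseteq L'$ and $U'\subseteq U$. $\mathbb{D}$ is the initial solution over bifinite domains of $\mathbb{D}\cong\prod_{\alpha\in\mathrm{Act}}\mathcal{M}(\mathbb{D})$, $d=((L^d_\alpha,U^d_\alpha))_\alpha$, viewed as a mixed transition system $(\mathbb{D},\mathbb{R}^a,\mathbb{R}^c)$ with $(d,\alpha,d')\in\mathbb{R}^a$ iff $d'\in L^d_\alpha$ and $(d,\alpha,d')\in\mathbb{R}^c$ iff $d'\in U^d_\alpha$. Hennessy–Milner logic: $\varphi::=tt\mid\neg\varphi\mid\langle\alpha\rangle\varphi\mid\varphi\wedge\varphi$; $[\alpha]\varphi:=\neg\langle\alpha\rangle\neg\varphi$, $\varphi\vee\psi:=\neg(\neg\varphi\wedge\neg\psi)$; empty conjunction is $tt$, empty disjunction is $\neg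 tt$. For $m\in\{a,c\}$ ($\neg a=c$, $\neg c=a$): $(\mathbb{D},d)\models^m tt$; $(\mathbb{D},d)\models^m\neg\varphi$ iff not $(\mathbb{D},d)\models^{\neg m}\varphi$; $(\mathbb{D},d)\models^m\langle\alpha\rangle\varphi$ iff $(\mathbb{D},d')\models^m\varphi$ for some $(d,\alpha,d')\in\mathbb{R}^m$; $\wedge$ componentwise. Process terms: $p::=\mathbf{0}\mid\bot\mid\alpha_{tt}.p\mid\alpha_\bot.p\mid p+p$ ($\alpha\in\mathrm{Act}$; neither summand of $+$ is $\mathbf{0}$ or $\bot$). Denotations: $[\![\mathbf{0}]\!]=((\emptyset,\emptyset))_\alpha$; $[\![\bot]\!]=((\emptyset,\mathbb{D}))_\alpha$; $[\![\alpha_{tt}.p]\!]$ has $\alpha$-component $({\downarrow}[\![p]\!],{\uparrow}[\![p]\!])$ and $(\emptyset,\emptyset)$ for $\beta\ne\alpha$; $[\![\alpha_\bot.p]\!]$ has $\alpha$-component $(\emptyset,{\uparrow}[\![p]\!])$ and $(\emptyset,\emptyset)$ for $\beta\ne\alpha$; $[\![p+q]\!]$ is the componentwise union of the $L$'s and of the $U$'s. Transitions: $\bot\xrightarrow{\gamma}_\bot\bot$ for all $\gamma$; $\alpha_{tt}.p\xrightarrow{\alpha}_{tt}p$; $\alpha_\bot.p\xrightarrow{\alpha}_\bot p$; if $p\xrightarrow{\alpha}_v p'$ then $p+q\xrightarrow{\alpha}_v p'$ and $q+p\xrightarrow{\alpha}_v p'$. Formulas: $\varphi_{\mathbf{0}}=\bigwedge_\alpha\neg\langle\alpha\rangle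 tt$; $\varphi_\bot=tt$; $\varphi_{\alpha_{tt}.p}=\langle\alpha\rangle\varphi_p\wedge[\alpha]\varphi_p\wedge\bigwedge_{\beta\ne\alpha}\neg\langle\beta\rangle tt$; $\varphi_{\alpha_\bot.p}=[\alpha]\varphi_p\wedge\bigwedge_{\beta\ne\alpha}\neg\langle\beta\rangle tt$; $\varphi_{p+q}=\bigwedge\{\langle\alpha\rangle\varphi_{r'} : p+q\xrightarrow{\alpha}_{tt}r'\}\wedge\bigwedge_{\alpha}[\alpha]\bigvee\{\varphi_{r'} : p+q\xrightarrow{\alpha}_v r',\ v\in\{\bot,tt\}\}$. *)

(* Defs.v *)
From Stdlib Require List.
From mathcomp Require Import all_boot.
Set Implicit Arguments.
Unset Strict Implicit.
Unset Printing Implicit Defensive.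

Section Domains.
Variables (D : Type) (le : D -> D -> Prop).

Definition subset (A B : D -> Prop) := forall x, A x -> B x.
Definition seteq (A B : D -> Prop) := forall x, A x <-> B x.
Definition setC (A : D -> Prop) : D -> Prop := fun x => ~ A x.
Definition upset (A : D -> Prop) : D -> Prop := fun y => exists x, A x /\ le x y.
Definition downset (A : D -> Prop) : D -> Prop := fun y => exists x, A x /\ le y x.
Definition up (x : D) : D -> Prop := fun y => le x y.
Definition down (x : D) : D -> Prop := fun y => le y x.
Definition is_upper (A : D -> Prop) := forall x y, A x -> le x y -> A y.

Definition finite_set (A : D -> Prop) := exists l : list D, forall x, A x <-> List.In x l.

Definition partial_order :=
  (forall x, le x x) /\ (forall x y z, le x y -> le y z -> le x z) /\
  (forall x y, le x y -> le y x -> x = y).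

Definition directed (S : D -> Prop) :=
  (exists x, S x) /\ (forall x y, S x -> S y -> exists z, S z /\ le x z /\ le y z).

Definition upper_bound (S : D -> Prop) (x : D) := forall s, S s -> le s x.
Definition is_lub (S : D -> Prop) (x : D) :=
  upper_bound S x /\ forall y, upper_bound S y -> le x y.

Definition dcpo := partial_order /\ forall S, directed S -> exists x, is_lub S x.

Definition compact (k : D) :=
  forall S x, directed S -> is_lub S x -> le k x -> exists s, S s /\ le k s.

Definition algebraic :=
  dcpo /\ forall x, directed (fun k => compact k /\ le k x) /\
                    is_lub (fun k => compact k /\ le k x) x.

Definition mub (A : D -> Prop) : D -> Prop :=
  fun x => upper_bound A x /\ forall y, upper_bound A y -> le y x -> y = x.

Definition mub_closure (F : D -> Prop) : D -> Prop :=
  fun x => forall C : D -> Prop,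
    subset F C ->
    (forall G, finite_set G -> subset G C -> subset (mub G) C) -> C x.

Definition bifinite :=
  algebraic /\
  forall F, finite_set F -> subset F compact ->
    finite_set (mub_closure F) /\ subset (mub_closure F) compact /\
    (forall y, upper_bound F y -> exists m, mub F m /\ le m y).

Definition scott_open (U : D -> Prop) :=
  forall x, U x <-> exists k, compact k /\ U k /\ le k x.
Definition scott_closed (L : D -> Prop) := scott_open (setC L).

(* Lawson topology: generated by the subbasis  up k \ up l,  k, l compact;
   open sets are unions of finite intersections of subbasic sets *)
Definition in_subbasic_meet (ps : list (D * D)) (x : D) :=
  forall kl, List.In kl ps -> le kl.1 x /\ ~ le kl.2 x.
Definition lawson_open (O : D -> Prop) :=
  forall x, O x -> exists ps : list (D * D),
    (forall kl, List.In kl ps -> compact kl.1 /\ compact kl.2) /\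
    in_subbasic_meet ps x /\ (forall y, in_subbasic_meet ps y -> O y).
Definition lawson_closed (U : D -> Prop) := lawson_open (setC U).

Definition mpd := ((D -> Prop) * (D -> Prop))%type.
Definition mixed (LU : mpd) :=
  scott_closed LU.1 /\ lawson_closed LU.2 /\ is_upper LU.2 /\
  seteq LU.1 (downset (fun y => LU.1 y /\ LU.2 y)).
Definition mpd_le (LU LU' : mpd) := subset LU.1 LU'.1 /\ subset LU'.2 LU.2.

End Domains.

Section Solution.
Variables (Act : finType) (D : Type) (le : D -> D -> Prop).
Variables (unfold : D -> Act -> mpd D) (fold : (Act -> mpd D) -> D).

Definition mixed_solution :=
  bifinite le /\
  (forall d a, mixed le (unfold d a)) /\
  (forall t : Act -> mpd D, (forall a, mixed le (t a)) ->
     forall a, seteq (unfold (fold t) a).1 (t a).1 /\ seteq (unfold (fold t) a).2 (t a).2) /\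
  (forall d, fold (unfold d) = d) /\
  (forall d d', le d d' <-> forall a, mpd_le (unfold d a) (unfold d' a)).

(* transition relations R^a (mode true) and R^c (mode false) *)
Definition trans_rel (m : bool) (d : D) (a : Act) (d' : D) :=
  if m then (unfold d a).1 d' else (unfold d a).2 d'.

End Solution.

Inductive form (Act : Type) : Type :=
| TT
| Neg of form Act
| Dia of Act & form Act
| And of form Act & form Act.
Arguments TT {Act}.

Definition Box (Act : Type) (a : Act) (f : form Act) := Neg (Dia a (Neg f)).
Definition Or (Act : Type) (f g : form Act) := Neg (And (Neg f) (Neg g)).
Definition bigAnd (Act : Type) (fs : seq (form Act)) := foldr (@And Act) TT fs.
Definition bigOr (Act : Type) (fs : seq (form Act)) := foldr (@Or Act) (Neg TT) fs.

(* mode true = a (may/"a"), mode false = c *)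
Fixpoint sat (Act : finType) (D : Type) (unfold : D -> Act -> mpd D)
    (m : bool) (d : D) (f : form Act) {struct f} : Prop :=
  match f with
  | TT => True
  | Neg g => ~ sat unfold (~~ m) d g
  | Dia a g => exists d', trans_rel unfold m d a d' /\ sat unfold m d' g
  | And g h => sat unfold m d g /\ sat unfold m d h
  end.

Inductive proc (Act : Type) : Type :=
| PNil
| PBot
| PreT of Act & proc Act
| PreB of Act & proc Act
| PSum of proc Act & proc Act.
Arguments PNil {Act}.
Arguments PBot {Act}.

Fixpoint wf_proc (Act : Type) (p : proc Act) : Prop :=
  match p with
  | PNil | PBot => True
  | PreT _ q | PreB _ q => wf_proc q
  | PSum q r =>
      q <> PNil /\ q <> PBot /\ r <> PNil /\ r <> PBot /\ wf_proc q /\ wf_proc r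
  end.

Section Procs.
Variable Act : finType.

(* labelled transitions  p --alpha-->_v p'  as triples (alpha, v, p'),
   v = true for tt, v = false for bot *)
Fixpoint trans (p : proc Act) : seq (Act * bool * proc Act) :=
  match p with
  | PNil => [::]
  | PBot => [seq (g, false, PBot) | g <- enum Act]
  | PreT a q => [:: (a, true, q)]
  | PreB a q => [:: (a, false, q)]
  | PSum q r => trans q ++ trans r
  end.

Definition no_other (a : Act) : form Act :=
  bigAnd [seq Neg (Dia b TT) | b <- enum Act & b != a].

(* characteristic formula phi_p; in the sum case the nested function [tr]
   computes [seq (t.1, phi t.2) | t <- trans s] (structurally). *)
Fixpoint phi (p : proc Act) : form Act :=
  match p with
  | PNil => bigAnd [seq Neg (Dia a TT) | a <- enum Act]
  | PBot => TT
  | PreT a q => And (And (Dia a (phi q)) (Box a (phi q))) (no_other a)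
  | PreB a q => And (Box a (phi q)) (no_other a)
  | PSum q r =>
      let fix tr (s : proc Act) : seq (Act * bool * form Act) :=
        match s with
        | PNil => [::]
        | PBot => [seq (g, false, phi s) | g <- enum Act]
        | PreT a s' => [:: (a, true, phi s')]
        | PreB a s' => [:: (a, false, phi s')]
        | PSum s1 s2 => tr s1 ++ tr s2
        end in
      let ts := tr q ++ tr r in
      And (bigAnd [seq Dia t.1.1 t.2 | t <- ts & t.1.2])
          (bigAnd [seq Box a (bigOr [seq t.2 | t <- ts & t.1.1 == a]) | a <- enum Act])
  end.

Variables (D : Type) (le : D -> D -> Prop).
Variables (unfold : D -> Act -> mpd D) (fold : (Act -> mpd D) -> D).

Definition emptyset : D -> Prop := fun _ => False.
Definition fullset : D -> Prop := fun _ => True.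

Fixpoint den (p : proc Act) : D :=
  match p with
  | PNil => fold (fun _ => (emptyset, emptyset))
  | PBot => fold (fun _ => (emptyset, fullset))
  | PreT a q => fold (fun b => if b == a then (down le (den q), up le (den q))
                               else (emptyset, emptyset))
  | PreB a q => fold (fun b => if b == a then (emptyset, up le (den q))
                               else (emptyset, emptyset))
  | PSum q r =>
      let dq := den q in let dr := den r in
      fold (fun b => ((fun x => (unfold dq b).1 x \/ (unfold dr b).1 x),
                      (fun x => (unfold dq b).2 x \/ (unfold dr b).2 x)))
  end.

End Procs.

(* Main.v *)
From Stdlib Require Import Classical.
Require Import Defs.
From mathcomp Require Import all_boot.
Set Implicit Arguments.
Unset Strict Implicit.

Definition alg_hyp (D : Type) (le : D -> D -> Prop) :=
  (forall x, le x x) /\ (forall x y z, le x y -> le y z -> le x z) /\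
  (forall x, directed le (fun k => compact le k /\ le k x) /\
             is_lub le (fun k => compact le k /\ le k x) x).

Lemma sep_lem D le (H : @alg_hyp D le) x y : ~ le x y -> exists k, compact le k /\ le k x /\ ~ le k y.
Proof.
move=> nxy; apply: NNPP => nex; apply: nxy.
case: H => _ [_ H]; case: (H x) => _ [_ Hl]; apply: Hl => s [cs sx].
apply: NNPP => nsy; apply: nex; exists s; done.
Qed.

Lemma cpt_lem D le (H : @alg_hyp D le) y : exists k, compact le k /\ le k y.
Proof. case: H => _ [_ H]; case: (H y) => [[[k Hk] _] _]; by exists k. Qed.

Lemma mixed_ee D le (H : @alg_hyp D le) : mixed le (@emptyset D, @emptyset D).
Proof.
split; [|split; [|split]].
- move=> x; split=> [_|[k [_ [? _]]]] //=.
  case: (cpt_lem H x) => k [ck kx]; exists k; split=> //; split=> //.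
- move=> x _; exists [::]; split=> //; split=> // y _; by [].
- by move=> x y.
- move=> x; split=> [[]|[z [[[]]]]].
Qed.

Lemma mixed_ef D le (H : @alg_hyp D le) : mixed le (@emptyset D, @fullset D).
Proof.
split; [|split; [|split]].
- move=> x; split=> [_|[k [_ [? _]]]] //=.
  case: (cpt_lem H x) => k [ck kx]; exists k; split=> //; split=> //.
- move=> x /= nx; exfalso; apply: nx; done.
- by move=> x y.
- move=> x; split=> [[]|[z [[[]]]]].
Qed.

Lemma mixed_eu D le (H : @alg_hyp D le) u : mixed le (@emptyset D, up le u).
Proof.
have [Hr [Ht _]] := H.
split; [|split; [|split]].
- move=> x; split=> [_|[k [_ [? _]]]] //=.
  case: (cpt_lem H x) => k [ck kx]; exists k; split=> //; split=> //.
- move=> x /= nx.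
  case: (sep_lem H nx) => k [ck [ku nkx]].
  case: (cpt_lem H x) => m [cm mx].
  exists [:: (m, k)]; split; first by move=> kl /= [<-|[]].
  split; first by move=> kl /= [<-|[]].
  move=> y Hy uy; have [_ nky] := Hy (m, k) (or_introl erefl).
  apply: nky; exact: Ht ku uy.
- move=> x y /= ux xy; exact: Ht ux xy.
- move=> x; split=> [[]|[z [[[]]]]].
Qed.

Lemma mixed_du D le (H : @alg_hyp D le) u : mixed le (down le u, up le u).
Proof.
have [Hr [Ht _]] := H.
split; [|split; [|split]].
- move=> x; split=> /=.
  + move=> nx; case: (sep_lem H nx) => k [ck [kx nku]].
    exists k; split=> //.
  + move=> [k [ck [nku kx]]] xu; apply: nku; exact: Ht kx xu.
- move=> x /= nx.
  case: (sep_lem H nx) => k [ck [ku nkx]].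
  case: (cpt_lem H x) => m [cm mx].
  exists [:: (m, k)]; split; first by move=> kl /= [<-|[]].
  split; first by move=> kl /= [<-|[]].
  move=> y Hy uy; have [_ nky] := Hy (m, k) (or_introl erefl).
  apply: nky; exact: Ht ku uy.
- move=> x y /= ux xy; exact: Ht ux xy.
- move=> x; split=> /=.
  + move=> xu; exists u; split=> //; split=> //; exact: Hr.
  + move=> [z [[zu _] xz]]; exact: Ht xz zu.
Qed.

Lemma mixed_U D le (H : @alg_hyp D le) (A B : mpd D) :
  mixed le A -> mixed le B ->
  mixed le ((fun x => A.1 x \/ B.1 x), (fun x => A.2 x \/ B.2 x)).
Proof.
have [Hr [Ht Ha]] := H.
case: A => L1 U1; case: B => L2 U2.
move=> [S1 [W1 [P1 E1]]] [S2 [W2 [P2 E2]]] /=.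
split; [|split; [|split]] => /=.
- move=> y; split.
  + move=> ny.
    have ny1 : ~ L1 y by move=> h; apply: ny; left.
    have ny2 : ~ L2 y by move=> h; apply: ny; right.
    case: ((S1 y).1 ny1) => k1 [ck1 [nk1 k1y]].
    case: ((S2 y).1 ny2) => k2 [ck2 [nk2 k2y]].
    case: (Ha y) => [[_ Hd] _].
    case: (Hd k1 k2 (conj ck1 k1y) (conj ck2 k2y)) => k [[ck ky] [k1k k2k]].
    exists k; split=> //; split=> //.
    case=> h.
    * apply: ((S1 k).2 (ex_intro _ k1 (conj ck1 (conj nk1 k1k)))); done.
    * apply: ((S2 k).2 (ex_intro _ k2 (conj ck2 (conj nk2 k2k)))); done.
  + move=> [k [ck [nk ky]]]; case=> h.
    * apply: ((S1 y).2 (ex_intro _ k (conj ck (conj (fun h' => nk (or_introl h')) ky)))); done.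
    * apply: ((S2 y).2 (ex_intro _ k (conj ck (conj (fun h' => nk (or_intror h')) ky)))); done.
- move=> y ny.
  have ny1 : ~ U1 y by move=> h; apply: ny; left.
  have ny2 : ~ U2 y by move=> h; apply: ny; right.
  case: (W1 y ny1) => ps1 [c1 [i1 o1]].
  case: (W2 y ny2) => ps2 [c2 [i2 o2]].
  have inc : forall (kl : D * D) , List.In kl (ps1 ++ ps2) -> List.In kl ps1 \/ List.In kl ps2.
    by move=> kl /List.in_app_iff.
  have inl : forall (kl : D * D), List.In kl ps1 -> List.In kl (ps1 ++ ps2).
    by move=> kl h; apply/List.in_app_iff; left.
  have inr : forall (kl : D * D), List.In kl ps2 -> List.In kl (ps1 ++ ps2).
    by move=> kl h; apply/List.in_app_iff; right.
  exists (ps1 ++ ps2); split.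
  + by move=> kl /inc [/c1|/c2].
  split.
  + by move=> kl /inc [/i1|/i2].
  + move=> z Hz; case=> h.
    * apply: (o1 z) => // kl /inl; exact: Hz.
    * apply: (o2 z) => // kl /inr; exact: Hz.
- move=> x y [h|h] xy; [left; exact: P1 h xy|right; exact: P2 h xy].
- move=> x; split.
  + case=> h.
    * case: ((E1 x).1 h) => z [[l u] xz]; exists z; split=> //; split; by left.
    * case: ((E2 x).1 h) => z [[l u] xz]; exists z; split=> //; split; by right.
  + move=> [z [[[l|l] _] xz]].
    * left; case: ((E1 z).1 l) => w [[lw uw] zw]; apply: (E1 x).2; exists w; split=> //; exact: Ht xz zw.
    * right; case: ((E2 z).1 l) => w [[lw uw] zw]; apply: (E2 x).2; exists w; split=> //; exact: Ht xz zw.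
Qed.

Lemma In_map (A B : Type) (f : A -> B) s y :
  List.In y (map f s) <-> exists x, List.In x s /\ y = f x.
Proof.
elim: s => [|x s IH] /=; first by split=> // [[x []]].
split.
- case=> [<-|/IH [z [zs ->]]].
  + by exists x; split=> //; left.
  + by exists z; split=> //; right.
- move=> [z [[<-|zs] e]]; subst y; [left=> //| right; apply/IH; by exists z].
Qed.

Lemma In_filter (A : Type) (P : pred A) s y :
  List.In y (filter P s) <-> List.In y s /\ P y.
Proof.
elim: s => [|x s IH] /=; first by split=> // [[]].
case Px: (P x) => /=.
- split; first by case=> [<-|/IH [? ?]]; split=> //; [left|right].
  by case=> [[<-|ys] Py]; [left|right; apply/IH].
- rewrite IH; split; first by case=> ? ?; split=> //; right.
  by case=> [[<-|ys] Py]; [rewrite Px in Py|].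
Qed.

Lemma In_enum (T : finType) (a : T) : List.In a (enum T).
Proof.
have : a \in enum T by rewrite mem_enum.
elim: (enum T) => [|x s IH]; first by rewrite in_nil.
rewrite inE; case/orP=> [/eqP ->|/IH h]; [by left|by right].
Qed.

Lemma sat_bigAnd (Act : finType) D (unf : D -> Act -> mpd D) m d fs :
  sat unf m d (bigAnd fs) <-> forall f, List.In f fs -> sat unf m d f.
Proof.
elim: fs => [|f fs IH] /=; first by split.
rewrite IH; split; first by case=> h1 h2 g [<-|]; [|apply: h2].
by move=> h; split=> [|g gi]; apply: h; [left|right].
Qed.

Lemma sat_bigOr (Act : finType) D (unf : D -> Act -> mpd D) d fs :
  sat unf true d (bigOr fs) <-> exists f, List.In f fs /\ sat unf true d f.
Proof.
elim: fs => [|f fs IH] /=; first by split=> // [[? []]].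
split.
- move=> h; apply: NNPP => nh; apply: h; split=> hh; apply: nh.
  + by exists f; split=> //; left.
  + case: (IH.1 hh) => g [gi sg]; by exists g; split=> //; right.
- move=> [g [[<-|gi] sg]] [h1 h2]; first by apply: h1.
  by apply: h2; apply: IH.2; exists g.
Qed.

Lemma sat_Box (Act : finType) D (unf : D -> Act -> mpd D) d a f :
  sat unf true d (Box a f) <-> forall d', (unf d a).2 d' -> sat unf true d' f.
Proof.
rewrite /Box /= /trans_rel /=; split.
- move=> h d' u; apply: NNPP => n; apply: h; by exists d'.
- move=> h [d' [u n]]; by apply: n; apply: h.
Qed.

Lemma sat_noDia (Act : finType) D (unf : D -> Act -> mpd D) d a :
  sat unf true d (Neg (Dia a TT)) <-> forall d', ~ (unf d a).2 d'.
Proof.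
rewrite /= /trans_rel /=; split.
- by move=> h d' u; apply: h; exists d'.
- by move=> h [d' [u _]]; apply: (h d').
Qed.

Lemma alg_of (Act : finType) D le (unf : D -> Act -> mpd D) fld :
  mixed_solution le unf fld -> alg_hyp le.
Proof.
case=> [[[[[Hr [Ht _]] _] Ha] _] _]; split=> //; split=> //.
Qed.

Lemma char_den (Act : finType) D le (unf : D -> Act -> mpd D) fld
  (H : mixed_solution le unf fld) p :
  wf_proc p -> p <> PBot -> forall a,
  (forall x, (unf (den le unf fld p) a).1 x <->
     exists t, List.In t (trans p) /\ t.1.1 = a /\ t.1.2 = true /\ le x (den le unf fld t.2)) /\
  (forall x, (unf (den le unf fld p) a).2 x <->
     exists t, List.In t (trans p) /\ t.1.1 = a /\ le (den le unf fld t.2) x).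
Proof.
have Ha := alg_of H.
case: H => _ [Hmix [Hfold _]].
elim: p => [|//|b q IHq|b q IHq|q IHq r IHr] /= wf nb a.
- have [E1 E2] := Hfold (fun _ => (@emptyset D, @emptyset D)) (fun _ => mixed_ee Ha) a.
  split=> x; [rewrite (E1 x)|rewrite (E2 x)]; split=> //= [[t [[]]]].
- pose t := fun c => if c == b then (down le (den le unf fld q), up le (den le unf fld q))
                     else (@emptyset D, @emptyset D).
  have Mt : forall c, mixed le (t c).
    by move=> c; rewrite /t; case: (c == b); [apply: mixed_du|apply: mixed_ee].
  have [E1 E2] := Hfold t Mt a.
  split=> x; [rewrite (E1 x)|rewrite (E2 x)]; rewrite /t; case: eqP => [->|nab] /=.
  + split; first by move=> h; exists (b, true, q); split; [left|].
    by move=> [u [[<-|[]] [_ [_ h]]]].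
  + split=> // [[u [[<-|[]] [/= e _]]]]; by apply: nab.
  + split; first by move=> h; exists (b, true, q); split; [left|].
    by move=> [u [[<-|[]] [_ h]]].
  + split=> // [[u [[<-|[]] [/= e _]]]]; by apply: nab.
- pose t := fun c => if c == b then (@emptyset D, up le (den le unf fld q))
                     else (@emptyset D, @emptyset D).
  have Mt : forall c, mixed le (t c).
    by move=> c; rewrite /t; case: (c == b); [apply: mixed_eu|apply: mixed_ee].
  have [E1 E2] := Hfold t Mt a.
  split=> x; [rewrite (E1 x)|rewrite (E2 x)]; rewrite /t; case: eqP => [->|nab] /=.
  + split=> // [[u [[<-|[]] [_ [/= e _]]]]] //.
  + split=> // [[u [[<-|[]] [/= e _]]]]; by apply: nab.
  + split; first by move=> h; exists (b, false, q); split; [left|].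
    by move=> [u [[<-|[]] [_ h]]].
  + split=> // [[u [[<-|[]] [/= e _]]]]; by apply: nab.
- case: wf => nq0 [nqb [nr0 [nrb [wq wr]]]].
  have [Lq Uq] := IHq wq nqb a; have [Lr Ur] := IHr wr nrb a.
  pose t := fun c => ((fun x => (unf (den le unf fld q) c).1 x \/ (unf (den le unf fld r) c).1 x),
                      (fun x => (unf (den le unf fld q) c).2 x \/ (unf (den le unf fld r) c).2 x)).
  have Mt : forall c, mixed le (t c) by move=> c; apply: mixed_U.
  have [E1 E2] := Hfold t Mt a.
  split=> x; [rewrite (E1 x) /= (Lq x) (Lr x)|rewrite (E2 x) /= (Uq x) (Ur x)]; split.
  + case=> [[u [ui h]]|[u [ui h]]]; exists u; split=> //; apply/List.in_app_iff; by [left|right].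
  + move=> [u [/List.in_app_iff [ui|ui] h]]; [left|right]; by exists u.
  + case=> [[u [ui h]]|[u [ui h]]]; exists u; split=> //; apply/List.in_app_iff; by [left|right].
  + move=> [u [/List.in_app_iff [ui|ui] h]]; [left|right]; by exists u.
Qed.

Definition trf (Act : finType) := fix tr (s : proc Act) : seq (Act * bool * form Act) :=
  match s with
  | PNil => [::]
  | PBot => [seq (g, false, phi s) | g <- enum Act]
  | PreT a s' => [:: (a, true, phi s')]
  | PreB a s' => [:: (a, false, phi s')]
  | PSum s1 s2 => tr s1 ++ tr s2
  end.

Lemma trf_eq (Act : finType) (s : proc Act) : trf s = [seq (t.1, phi t.2) | t <- trans s].
Proof.
elim: s => [|||//|q IHq r IHr] //=.
- by rewrite -map_comp.
- by rewrite IHq IHr map_cat.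
Qed.

Lemma phi_sum (Act : finType) (q r : proc Act) :
  phi (PSum q r) =
  And (bigAnd [seq Dia t.1.1 t.2 | t <- trf q ++ trf r & t.1.2])
      (bigAnd [seq Box a (bigOr [seq t.2 | t <- trf q ++ trf r & t.1.1 == a]) | a <- enum Act]).
Proof. reflexivity. Qed.

Lemma lower_mixed D le (A : mpd D) : (forall x y z, le x y -> le y z -> le x z) ->
  mixed le A -> forall x y, A.1 y -> le x y -> A.1 x.
Proof.
move=> Ht [_ [_ [_ E]]] x y Ay xy.
case: ((E y).1 Ay) => z [[Az Bz] yz]; apply: (E x).2; exists z; split=> //; exact: Ht xy yz.
Qed.

Lemma sat_And (Act : finType) D (unf : D -> Act -> mpd D) m d f g :
  sat unf m d (And f g) <-> sat unf m d f /\ sat unf m d g.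
Proof. by []. Qed.

Lemma sat_Dia (Act : finType) D (unf : D -> Act -> mpd D) d a f :
  sat unf true d (Dia a f) <-> exists d', (unf d a).1 d' /\ sat unf true d' f.
Proof. by []. Qed.

Lemma le_SC (Act : finType) D le (unf : D -> Act -> mpd D) fld
  (H : mixed_solution le unf fld) p d :
  wf_proc p -> p <> PBot ->
  (le (den le unf fld p) d <-> forall a,
    (forall t, List.In t (trans p) -> t.1.1 = a -> t.1.2 = true -> (unf d a).1 (den le unf fld t.2)) /\
    (forall x, (unf d a).2 x -> exists t, List.In t (trans p) /\ t.1.1 = a /\ le (den le unf fld t.2) x)).
Proof.
have Ha := alg_of H; have [Hr [Ht _]] := Ha.
have Hch := char_den H.
case: H => _ [Hmix [_ [_ Hle]]] wf nb.
rewrite Hle; split.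
- move=> h a; have [hL hU] := h a; have [cL cU] := Hch p wf nb a; split.
  + move=> t ti ea eb; apply: hL; apply/cL; exists t; split=> //; split=> //; split=> //; exact: Hr.
  + move=> x ux; exact/cU/hU.
- move=> h a; have [hL hU] := h a; have [cL cU] := Hch p wf nb a; split.
  + move=> x /cL [t [ti [ea [eb xt]]]]; exact: (lower_mixed Ht (Hmix d a)) (hL t ti ea eb) xt.
  + move=> x ux; apply/cU; exact: hU.
Qed.

Lemma bot_le (Act : finType) D le (unf : D -> Act -> mpd D) fld
  (H : mixed_solution le unf fld) d : le (den le unf fld PBot) d.
Proof.
have Ha := alg_of H.
case: H => _ [Hmix [Hfold [_ Hle]]].
apply/Hle => a; have [E1 E2] := Hfold (fun _ => (@emptyset D, @fullset D)) (fun _ => mixed_ef Ha) a.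
split=> x /=; [move/E1; case|move=> _; apply/E2; done].
Qed.

Lemma main_lem (Act : finType) D le (unf : D -> Act -> mpd D) fld
  (H : mixed_solution le unf fld) p :
  wf_proc p ->
  (forall d, le (den le unf fld p) d <-> sat unf true d (phi p)) /\
  (forall t, List.In t (trans p) -> forall d, le (den le unf fld t.2) d <-> sat unf true d (phi t.2)).
Proof.
have Ha := alg_of H; have [Hr [Ht _]] := Ha.
have HSC := le_SC H.
have Hbot := bot_le H.
case: (H) => _ [Hmix _].
elim: p => [|| b q IHq | b q IHq | q IHq r IHr] wf.
- split; last by [].
  move=> d; rewrite (HSC _ d wf) // sat_bigAnd; split.
  + move=> h f /In_map [a [_ ->]]; apply/sat_noDia => x ux.
    case: (h a) => _ hU; by case: (hU x ux) => t [[]].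
  + move=> h a; split=> [t []|x ux].
    have := h (Neg (Dia a TT)) ((In_map _ _ _).2 (ex_intro _ a (conj (In_enum a) erefl))).
    move/sat_noDia => nU; case: (nU x ux).
- split; first by move=> d; split=> // _; exact: Hbot.
  move=> t /In_map [g [_ ->]] d /=; split=> // _; exact: Hbot.
- have [Pq _] := IHq wf.
  split; last by move=> t [<-|[]] d /=; exact: Pq.
  move=> d; rewrite (HSC _ d wf) // !sat_And sat_Box sat_Dia /no_other sat_bigAnd; split.
  + move=> h; split; [split|].
    * exists (den le unf fld q); have [hL _] := h b; split.
      - by apply: (hL (b, true, q)) => //; left.
      - apply/Pq; exact: Hr.
    * move=> x ux; have [_ hU] := h b; case: (hU x ux) => t [[<-|[]] [_ qx]]; exact/Pq.
    * move=> f /In_map [c [/In_filter [_ cb] ->]]; apply/sat_noDia => x ux.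
      have [_ hU] := h c; case: (hU x ux) => t [[<-|[]] [/= e _]].
      by rewrite e eqxx in cb.
  + move=> [[[d' [Ld' sd']] hB] hN] a; split.
    * move=> t [<-|[]] /= <- _; apply: (lower_mixed Ht (Hmix d b) Ld'); exact/Pq.
    * move=> x ux; case: (eqVneq a b) => [eab|nab].
      - subst a; exists (b, true, q); split; [by left|split=> //]; exact/Pq/hB.
      - exfalso.
        have := hN (Neg (Dia a TT)) ((In_map _ _ _).2 (ex_intro _ a (conj ((In_filter _ _ _).2 (conj (In_enum a) nab)) erefl))).
        move/sat_noDia => nU; exact: nU x ux.
- have [Pq _] := IHq wf.
  split; last by move=> t [<-|[]] d /=; exact: Pq.
  move=> d; rewrite (HSC _ d wf) // !sat_And sat_Box /no_other sat_bigAnd; split.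
  + move=> h; split.
    * move=> x ux; have [_ hU] := h b; case: (hU x ux) => t [[<-|[]] [_ qx]]; exact/Pq.
    * move=> f /In_map [c [/In_filter [_ cb] ->]]; apply/sat_noDia => x ux.
      have [_ hU] := h c; case: (hU x ux) => t [[<-|[]] [/= e _]].
      by rewrite e eqxx in cb.
  + move=> [hB hN] a; split.
    * by move=> t [<-|[]].
    * move=> x ux; case: (eqVneq a b) => [eab|nab].
      - subst a; exists (b, false, q); split; [by left|split=> //]; exact/Pq/hB.
      - exfalso.
        have := hN (Neg (Dia a TT)) ((In_map _ _ _).2 (ex_intro _ a (conj ((In_filter _ _ _).2 (conj (In_enum a) nab)) erefl))).
        move/sat_noDia => nU; exact: nU x ux.
- move: (wf) => [nq0 [nqb [nr0 [nrb [wq wr]]]]].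
  have [Pq Cq] := IHq wq; have [Pr Cr] := IHr wr.
  have Ct : forall t, List.In t (trans q ++ trans r) ->
      forall d, le (den le unf fld t.2) d <-> sat unf true d (phi t.2).
    by move=> t /List.in_app_iff [ti|ti]; [exact: Cq|exact: Cr].
  split; last exact: Ct.
  move=> d; rewrite (HSC _ d wf) // phi_sum sat_And !sat_bigAnd !trf_eq -!map_cat /=; split.
  + move=> h; split.
    * move=> f /In_map [u [/In_filter [/In_map [t [ti ->]] /= tb] ->]].
      apply/sat_Dia; exists (den le unf fld t.2); have [hL _] := h t.1.1; split.
      - exact: hL t ti erefl tb.
      - apply/(Ct t ti); exact: Hr.
    * move=> f /In_map [a [_ ->]]; apply/sat_Box => x ux; apply/sat_bigOr.
      have [_ hU] := h a; case: (hU x ux) => t [ti [ta tx]].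
      exists (phi t.2); split; last exact/(Ct t ti).
      apply/In_map; exists (t.1, phi t.2); split=> //; apply/In_filter; split.
      - apply/In_map; by exists t.
      - by rewrite /= ta eqxx.
  + move=> [hD hB] a; split.
    * move=> t ti ta tb.
      have hin : List.In (Dia t.1.1 (phi t.2))
        [seq Dia u.1.1 u.2 | u <- [seq (t0.1, phi t0.2) | t0 <- trans q ++ trans r] & u.1.2].
        apply/In_map; exists (t.1, phi t.2); split=> //; apply/In_filter; split=> //.
        apply/In_map; by exists t.
      move: (hD _ hin) => /sat_Dia [d' [Ld' sd']].
      rewrite -ta; apply: (lower_mixed Ht (Hmix d _) Ld'); exact/(Ct t ti).
    * move=> x ux.
      have := hB _ ((In_map _ _ _).2 (ex_intro _ a (conj (In_enum a) erefl))).
      move/sat_Box => /(_ x ux) /sat_bigOr [f [/In_map [u [/In_filter [/In_map [t [ti ->]] /= /eqP ta] ->]] sf]].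
      exists t; split=> //; split=> //; exact/(Ct t ti).
Qed.

Theorem lemma3p11 (Act : finType) (D : Type) (le : D -> D -> Prop)
    (unfold : D -> Act -> mpd D) (fold : (Act -> mpd D) -> D)
    (Hsol : mixed_solution le unfold fold)
    (p : proc Act) (Hp : wf_proc p) (d : D) :
  le (den le unfold fold p) d <-> sat unfold true d (phi p).
Proof. exact: ((main_lem Hsol Hp).1 d). Qed.
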